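(* Let $K\ge 1$, let $a_1,\dots,a_K\ge 0$ with $\sum_{k=1}^K a_k=1$, and let $0<\lambda<\frac{1}{K}$. For each fixed $\delta>0$ let $z^{\delta}\in\mathbb{R}^K_+$ be a solution (global minimizer) of $$\min_{z\in\mathbb{R}^K}\; -\sum_{k=1}^K a_k\log(z_k)+\lambda\sum_{k=1}^K\log(\delta+z_k)\quad\text{subject to } z\ge 0,\ \sum_{k=1}^K z_k=1.$$ Then $\lim_{\delta\to 0} z^{\delta}=z^0$, where $$z^0_k:=\frac{(a_k-\lambda)_+}{\sum_{j=1}^K (a_j-\lambda)_+}\quad\text{for each }k\in\{1,\dots,K\}.$$
   Context: $(t)_+=\max(t,0)$. The inequality $z\ge 0$ is entrywise. *)

(* Defs.v *)
From HB Require Import structures.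
From mathcomp Require Import all_boot all_order all_algebra.
From mathcomp Require Import all_classical all_reals all_analysis.
Set Implicit Arguments. Unset Strict Implicit. Unset Printing Implicit Defensive.
Import Order.TTheory GRing.Theory Num.Theory.
Import numFieldNormedType.Exports.
Local Open Scope ring_scope.

Definition pospart (R : realType) (t : R) : R := Num.max t 0.

(* the term -a log x, with values in the extended reals:
   -a log 0 = +oo when a > 0, and the convention 0 * log 0 = 0 *)
Definition neg_a_log (R : realType) (a x : R) : \bar R :=
  if x == 0 then (if a == 0 then 0%E else +oo%E) else ((- (a * ln x))%:E).

Definition objective (R : realType) (K : nat) (a : 'I_K -> R) (lam delta : R)
    (z : 'I_K -> R) : \bar R :=
  (\sum_(k < K) (neg_a_log (a k) (z k) + (lam * ln (delta + z k))%:E))%E.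

Definition feasible (R : realType) (K : nat) (z : 'I_K -> R) : Prop :=
  (forall k, 0 <= z k) /\ \sum_(k < K) z k = 1.

Definition is_minimizer (R : realType) (K : nat) (a : 'I_K -> R) (lam delta : R)
    (z : 'I_K -> R) : Prop :=
  feasible z /\
  forall y : 'I_K -> R, feasible y ->
    (objective a lam delta z <= objective a lam delta y)%E.

Definition z0 (R : realType) (K : nat) (a : 'I_K -> R) (lam : R) (k : 'I_K) : R :=
  pospart (a k - lam) / \sum_(j < K) pospart (a j - lam).

(* Main.v *)
Require Import Defs.
From HB Require Import structures.
From mathcomp Require Import all_boot all_order all_algebra.
From mathcomp Require Import all_classical all_reals all_analysis.
From mathcomp Require Import ring lra.
Import Order.TTheory GRing.Theory Num.Theory.
Import numFieldNormedType.Exports.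
Local Open Scope ring_scope.
Local Open Scope classical_set_scope.

Lemma bound_small {R : realType} {a lam nu z d eps : R} :
  0 <= a -> a <= lam -> a <= 1 -> 0 <= nu -> nu <= 1 -> 0 <= z -> 0 < d ->
  d < eps ^+ 2 -> 0 < eps ->
  (a - lam) * z + a * d = nu * z * (d + z) -> nu * z <= eps.
Proof.
move=> a0 al a1 n0 n1 z0 d0 de e0 id.
have h1 : nu * z * (d + z) <= d.
  rewrite -id.
  have : (a - lam) * z <= 0 by apply: mulr_le0_ge0 => //; lra.
  have : a * d <= d by rewrite -[X in _ <= X]mul1r ler_pM2r.
  lra.
have h2 : (nu * z) ^+ 2 <= d.
  apply: le_trans h1; rewrite expr2.
  have w0 : 0 <= nu * z by apply: mulr_ge0.
  apply: ler_wpM2l => //.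
  have : 0 <= (1 - nu) * z by apply: mulr_ge0 => //; lra.
  lra.
have : (nu * z) ^+ 2 < eps ^+ 2 by apply: le_lt_trans h2 de.
have : 0 <= nu * z by apply: mulr_ge0.
nra.
Qed.

Lemma bound_big {R : realType} {a lam nu z d eps : R} :
  lam < a -> 0 < lam -> a <= 1 -> 0 <= nu -> nu <= 1 -> 0 <= z -> 0 < d ->
  d < (a - lam) / 2 -> d < eps * (a - lam) / 2 -> d < eps -> 0 < eps ->
  (a - lam) * z + a * d = nu * z * (d + z) -> `|(a - lam) - nu * z| <= eps.
Proof.
move=> la l0 a1 n0 n1 z0 d0 dd1 dd2 de e0 id.
set D := a - lam in dd1 dd2 id *.
have D0 : 0 < D by rewrite /D subr_gt0.
have zp : 0 < z.
  rewrite lt_neqAle z0 andbT; apply/eqP => zz.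
  move: id; rewrite -zz !(mulr0, mul0r, addr0, add0r) => /eqP.
  rewrite mulf_eq0 => /orP [/eqP|/eqP]; lra.
set E := nu * z - D.
have Ez : E * z = a * d - nu * d * z by rewrite /E; rewrite mulrBl; lra.
have Elo : - d <= E.
  have : - d * z <= E * z.
    rewrite Ez.
    have : 0 <= (1 - nu) * (d * z) by apply: mulr_ge0; [lra| apply: mulr_ge0; lra].
    have : 0 <= a * d by apply: mulr_ge0; lra.
    lra.
  by rewrite ler_pM2r.
have zD : D / 2 <= z.
  have : nu * z <= z by nra.
  rewrite /E in Elo; lra.
have Eup : E * (D / 2) <= d.
  case: (lerP E 0) => E0; first by nra.
  apply: le_trans (_ : E * z <= d); first by rewrite ler_pM2l.
  rewrite Ez.
  have : 0 <= nu * d * z by apply: mulr_ge0 => //; apply: mulr_ge0; lra.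
  have : a * d <= d by rewrite -[X in _ <= X]mul1r ler_pM2r.
  lra.
rewrite ler_norml; apply/andP; split.
  have : E <= eps.
    have : E * (D / 2) <= eps * D / 2 by lra.
    move=> h; rewrite -(ler_pM2r (_ : 0 < D / 2)); first by rewrite [eps * (D / 2)]mulrA.
    by apply: divr_gt0.
  rewrite /E; lra.
rewrite /E in Elo; lra.
Qed.

Lemma key_cvg {R : realType} (a lam : R) (nu zk : R -> R) :
  0 <= a -> a <= 1 -> 0 < lam ->
  (\forall t \near 0^'+, [/\ 0 <= nu t, nu t <= 1, 0 <= zk t &
      (a - lam) * zk t + a * t = nu t * zk t * (t + zk t)]) ->
  (fun t => nu t * zk t) @ 0^'+ --> pospart (a - lam).
Proof.
move=> a0 a1 l0 H; apply/cvgrPdist_le => eps e0.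
have [al|la] := lerP a lam.
  have -> : pospart (a - lam) = 0 by rewrite /pospart; apply/max_idPr; lra.
  near=> t.
  have [n0 n1 z0 id] : [/\ 0 <= nu t, nu t <= 1, 0 <= zk t &
      (a - lam) * zk t + a * t = nu t * zk t * (t + zk t)] by near: t.
  have t0 : 0 < t by near: t; exact: nbhs_right_gt.
  have te : t < eps ^+ 2 by near: t; apply: nbhs_right_lt; exact: exprn_gt0.
  rewrite sub0r normrN ger0_norm; last exact: mulr_ge0.
  exact: (bound_small a0 al a1 n0 n1 z0 t0 te e0 id).
have -> : pospart (a - lam) = a - lam by rewrite /pospart; apply/max_idPl; lra.
have D0 : 0 < a - lam by lra.
near=> t.
have [n0 n1 z0 id] : [/\ 0 <= nu t, nu t <= 1, 0 <= zk t &
    (a - lam) * zk t + a * t = nu t * zk t * (t + zk t)] by near: t.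
have t0 : 0 < t by near: t; exact: nbhs_right_gt.
have t1 : t < (a - lam) / 2 by near: t; apply: nbhs_right_lt; exact: divr_gt0.
have t2 : t < eps * (a - lam) / 2.
  by near: t; apply: nbhs_right_lt; apply: divr_gt0 => //; exact: mulr_gt0.
have t3 : t < eps by near: t; apply: nbhs_right_lt.
exact: (bound_big la l0 a1 n0 n1 z0 t0 t1 t2 t3 e0 id).
Unshelve. all: by end_near.
Qed.
Lemma cvg_sumI {R : realType} (n : nat) (f : 'I_n -> R -> R) (l : 'I_n -> R) :
  (forall i, f i @ 0^'+ --> l i) ->
  (fun t => \sum_(i < n) f i t) @ 0^'+ --> \sum_(i < n) l i.
Proof.
elim: n f l => [|n IH] f l H.
  under eq_fun do rewrite big_ord0.
  rewrite big_ord0; exact: cvg_cst.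
under eq_fun do rewrite big_ord_recr.
rewrite big_ord_recr; apply: cvgD; last exact: H.
by apply: (IH (fun i => f (widen_ord (leqnSn n) i))) => i; exact: H.
Qed.

Lemma assemble {R : realType} (K : nat) (a : 'I_K -> R) (lam : R)
  (z : R -> 'I_K -> R) (nu : R -> R) :
  (forall k, (fun t => nu t * z t k) @ 0^'+ --> pospart (a k - lam)) ->
  (\forall t \near 0^'+, \sum_(k < K) z t k = 1 /\ 0 < nu t) ->
  0 < \sum_(k < K) pospart (a k - lam) ->
  forall k, (fun t => z t k) @ 0^'+ --> z0 a lam k.
Proof.
move=> Hw Hn S0 k.
have Hs := @cvg_sumI R K (fun k t => nu t * z t k) _ Hw.
have Hnu : nu @ 0^'+ --> \sum_(k < K) pospart (a k - lam).
  apply: cvg_trans Hs; apply: near_eq_cvg; near=> t.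
  have [s1 _] : \sum_(k < K) z t k = 1 /\ 0 < nu t by near: t.
  by rewrite /= -mulr_sumr s1 mulr1.
have HV : (fun t => (nu t)^-1) @ 0^'+ --> (\sum_(k < K) pospart (a k - lam))^-1.
  by apply: cvgV => //; exact: lt0r_neq0.
have Hk : (fun t => (nu t * z t k) * (nu t)^-1) @ 0^'+ -->
   pospart (a k - lam) * (\sum_(k < K) pospart (a k - lam))^-1.
  by apply: cvgM.
rewrite /z0; apply: cvg_trans Hk; apply: near_eq_cvg; near=> t.
have [_ n0] : \sum_(k < K) z t k = 1 /\ 0 < nu t by near: t.
by rewrite /= mulrC mulrA mulVf ?mul1r // lt0r_neq0.
Unshelve. all: by end_near.
Qed.

Lemma is_derive_lnlin {R : realType} {c e t : R} : 0 < c + e * t ->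
  is_derive t 1 (fun s => ln (c + e * s)) (e / (c + e * t)).
Proof.
move=> h.
have g : is_derive t 1 (fun s : R => c + e * s) e.
  have H := is_deriveD (is_derive_cst c t 1) (is_deriveZ e (is_derive_id t (1:R))).
  apply: is_derive_eq H _.
  by rewrite add0r /GRing.scale /= mulr1.
have := @is_derive1_comp _ (@ln R) (fun s => c + e * s) t _ _ (is_derive1_ln h) g.
by rewrite mulrC.
Qed.

Lemma is_derive_rr {R : realType} (a lam d c e t : R) : 0 < c + e * t -> 0 < d + (c + e * t) ->
  is_derive t 1 (fun s => - (a * ln (c + e * s)) + lam * ln (d + (c + e * s)))
    (- (a * (e / (c + e * t))) + lam * (e / (d + (c + e * t)))).
Proof.
move=> h1 h2.
have h3 : 0 < (d + c) + e * t by rewrite -addrA.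
have L1 := is_derive_lnlin h1.
have L2 := is_derive_lnlin h3.
have H := is_deriveD (is_deriveN (is_deriveZ a L1)) (is_deriveZ lam L2).
have E : (fun s => - (a * ln (c + e * s)) + lam * ln (d + (c + e * s))) =
   (- (a \*: (fun s => ln (c + e * s)))) + (lam \*: (fun s => ln ((d + c) + e * s))).
  by apply/funext => s /=; rewrite addrA.
rewrite E; apply: is_derive_eq H _.
by rewrite -addrA.
Qed.

Definition rr {R : realType} (a lam d x : R) : R := - (a * ln x) + lam * ln (d + x).
Definition gg {R : realType} (a lam d x : R) : R := a / x - lam / (d + x).

Lemma term_eq {R : realType} (a lam d x : R) : (0 < x \/ a = 0) ->
  (neg_a_log a x + (lam * ln (d + x))%:E)%E = (rr a lam d x)%:E.
Proof.
move=> h; rewrite /neg_a_log /rr.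
case: eqP => [x0|xn0].
  have -> : a = 0 by case: h => // ; rewrite x0 ltxx.
  by rewrite eqxx add0e mul0r oppr0 add0r.
by rewrite EFinD.
Qed.

Lemma term_ge {R : realType} (a lam d x : R) :
  ((rr a lam d x)%:E <= neg_a_log a x + (lam * ln (d + x))%:E)%E.
Proof.
rewrite /neg_a_log /rr.
case: eqP => [x0|xn0]; last by rewrite EFinD.
case: eqP => [->|an0]; first by rewrite add0e mul0r oppr0 add0r.
by rewrite addye // leey.
Qed.

Lemma obj_eq {R : realType} {K : nat} {a : 'I_K -> R} {lam d : R} {y : 'I_K -> R} :
  (forall i, 0 < y i \/ a i = 0) ->
  objective a lam d y = (\sum_(i < K) rr (a i) lam d (y i))%:E.
Proof.
move=> h; rewrite /objective -sumEFin; apply: eq_bigr => i _; exact: term_eq.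
Qed.

Lemma big2 {R : realType} (K : nat) (h : 'I_K -> R) (j k : 'I_K) : j != k ->
  \sum_(i < K) h i = h j + h k + \sum_(i < K | (i != j) && (i != k)) h i.
Proof.
move=> jk; rewrite (bigD1 j) //= (bigD1 k) /=; last by rewrite eq_sym.
by rewrite addrA.
Qed.

Definition ymove {K : nat} {R : realType} (z : 'I_K -> R) (j k : 'I_K) (s : R) : 'I_K -> R :=
  fun i => if i == j then z j + s else if i == k then z k - s else z i.

Lemma big_ymove {R : realType} (K : nat) (h : 'I_K -> R -> R) (z : 'I_K -> R) (j k : 'I_K) (s : R) :
  j != k ->
  \sum_(i < K) h i (ymove z j k s i) =
  h j (z j + s) + h k (z k - s) + \sum_(i < K | (i != j) && (i != k)) h i (z i).
Proof.
move=> jk; rewrite (@big2 R K (fun i => h i (ymove z j k s i)) j k jk) /ymove eqxx.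
rewrite eq_sym (negbTE jk) eqxx; congr (_ + _).
by apply: eq_bigr => i /andP [/negbTE -> /negbTE ->].
Qed.

Lemma pos_of_min {R : realType} {K : nat} {a : 'I_K -> R} {lam d : R} {z : 'I_K -> R} :
  (0 < K)%N -> is_minimizer a lam d z -> forall i, a i != 0 -> 0 < z i.
Proof.
move=> K0 [[zge zs] zmin] i ai.
rewrite lt_neqAle zge andbT; apply/negP => /eqP zi0.
pose u := fun _ : 'I_K => 1 / (K%:R : R).
have uK : 0 < 1 / (K%:R : R) by rewrite divr_gt0 // ltr0n.
have fu : feasible u.
  split; first by move=> ?; exact: ltW.
  rewrite sumr_const card_ord div1r -[_ *+ K]mulr_natr mulVf //.
  by rewrite pnatr_eq0 -lt0n.
have := zmin u fu.
rewrite (@obj_eq R K a lam d u); last by move=> ?; left.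
rewrite /objective (bigD1 i) //= {1}/neg_a_log -zi0 eqxx (negbTE ai).
set rest := (\sum_(j < K | j != i) _)%E.
have hr : ((\sum_(j < K | j != i) rr (a j) lam d (z j))%:E <= rest)%E.
  by rewrite -sumEFin; apply: lee_sum => j _; exact: term_ge.
have rN : rest != -oo%E.
  apply/eqP => e; rewrite e leeNy_eq in hr; done.
by rewrite addye // addye // leye_eq.
Qed.

Lemma pos_or0 {R : realType} {K : nat} {a : 'I_K -> R} {lam d : R} {z : 'I_K -> R} :
  (0 < K)%N -> is_minimizer a lam d z -> forall i, 0 < z i \/ a i = 0.
Proof.
move=> K0 zm i; case: (eqVneq (a i) 0) => [->|ai]; [by right| left].
exact: (pos_of_min K0 zm).
Qed.

Lemma kkt {R : realType} {K : nat} {a : 'I_K -> R} {lam d : R} {z : 'I_K -> R} :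
  (0 < K)%N -> 0 < d -> is_minimizer a lam d z ->
  forall j k, j != k -> 0 < z j -> 0 < z k ->
  gg (a j) lam d (z j) = gg (a k) lam d (z k).
Proof.
move=> K0 d0 zm j k jk zj zk.
have hz := pos_or0 K0 zm.
have [[zge zs] zmin] := zm.
pose phi s := rr (a j) lam d (z j + 1 * s) + rr (a k) lam d (z k + -1 * s).
have hmin : forall s, s \in `](- z j), (z k)[%R -> phi 0 <= phi s.
  move=> s; rewrite in_itv /= => /andP [s1 s2].
  have yp : forall i, 0 < ymove z j k s i \/ a i = 0.
    move=> i; rewrite /ymove; case: ifP => _; first by left; lra.
    by case: ifP => _; [left; lra| exact: hz].
  have fy : feasible (ymove z j k s).
    split.
      move=> i; case: (yp i) => [/ltW //|ai0].
      rewrite /ymove; case: ifP => _; first by lra.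
      by case: ifP => _; [lra| exact: zge].
    have := @big_ymove R K (fun _ x => x) z j k s jk; rewrite /= => ->.
    by rewrite -zs (@big2 R K z j k jk); congr (_ + _); lra.
  have := zmin _ fy.
  rewrite (obj_eq hz) (obj_eq yp) lee_fin.
  rewrite (@big_ymove R K (fun i x => rr (a i) lam d x) z j k s jk).
  rewrite (@big2 R K (fun i => rr (a i) lam d (z i)) j k jk).
  by rewrite lerD2r /phi !mulr0 !addr0 mul1r mulN1r.
have hd : forall t, t \in `](- z j), (z k)[%R -> is_derive t 1 phi
   ((- (a j * (1 / (z j + 1 * t))) + lam * (1 / (d + (z j + 1 * t)))) +
    (- (a k * (-1 / (z k + -1 * t))) + lam * (-1 / (d + (z k + -1 * t))))).
  move=> t; rewrite in_itv /= => /andP [t1 t2].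
  have A := @is_derive_rr R (a j) lam d (z j) 1 t ltac:(lra) ltac:(lra).
  have B := @is_derive_rr R (a k) lam d (z k) (-1) t ltac:(lra) ltac:(lra).
  have := is_deriveD A B.
  have -> : phi = (fun s => - (a j * ln (z j + 1 * s)) + lam * ln (d + (z j + 1 * s))) +
     (fun s => - (a k * ln (z k + -1 * s)) + lam * ln (d + (z k + -1 * s))).
    by apply/funext => s.
  done.
have i0 : (0:R) \in `](- z j), (z k)[%R by rewrite in_itv /=; apply/andP; split; lra.
have D0 : is_derive (0:R) (1:R) phi 0.
  apply: (derive1_at_min (a := - z j) (b := z k)) => //; first lra.
  by move=> t ht; case: (hd t ht).
have e1 := @derive_val _ _ _ _ _ _ _ D0.
have e2 := @derive_val _ _ _ _ _ _ _ (hd 0 i0).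
rewrite e1 !mulr0 !addr0 in e2.
rewrite !div1r !mulN1r !mulrN in e2.
rewrite /gg; lra.
Qed.

Lemma per_delta {R : realType} {K : nat} {a : 'I_K -> R} {lam d : R} {z : 'I_K -> R} (nu : R) :
  (0 < K)%N -> (forall k, 0 <= a k) -> \sum_(k < K) a k = 1 -> 0 < lam ->
  lam * K%:R < 1 -> 0 < d -> is_minimizer a lam d z ->
  nu = 1 - lam * \sum_(i < K) z i / (d + z i) ->
  [/\ 0 < nu, nu <= 1 & forall k, (a k - lam) * z k + a k * d = nu * z k * (d + z k)].
Proof.
move=> K0 a0 asum l0 lK d0 zm nuE.
have hz := pos_or0 K0 zm.
have [[zge zs] zmin] := zm.
have fr0 : forall i, 0 <= z i / (d + z i).
  by move=> i; apply: divr_ge0 => //; apply: addr_ge0 => //; exact: ltW.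
have fr1 : forall i, z i / (d + z i) <= 1.
  move=> i; rewrite ler_pdivrMr; last by apply: ltr_pwDl.
  by rewrite mul1r lerDr ltW.
have S0 : 0 <= \sum_(i < K) z i / (d + z i) by apply: sumr_ge0 => i _.
have S1 : \sum_(i < K) z i / (d + z i) <= K%:R.
  have -> : (K%:R : R) = \sum_(i < K) (1 : R) by rewrite sumr_const card_ord.
  by apply: ler_sum => i _.
have nu0 : 0 < nu.
  have : lam * \sum_(i < K) z i / (d + z i) <= lam * K%:R by rewrite ler_wpM2l // ltW.
  rewrite nuE; lra.
have nu1 : nu <= 1.
  have : 0 <= lam * \sum_(i < K) z i / (d + z i) by apply: mulr_ge0 => //; exact: ltW.
  rewrite nuE; lra.
have termE : forall i, z i * gg (a i) lam d (z i) = a i - lam * (z i / (d + z i)).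
  move=> i; have := zge i; rewrite le_eqVlt => /orP [/eqP zi0|zi].
    have ai : a i = 0 by case: (hz i) => //; rewrite -zi0 ltxx.
    by rewrite -zi0 ai mul0r mul0r mulr0 subr0.
  rewrite /gg mulrBr mulrCA divff ?mulr1; last exact: lt0r_neq0.
  by rewrite mulrCA mulrA.
have sumE : \sum_(i < K) z i * gg (a i) lam d (z i) = nu.
  under eq_bigr do rewrite termE.
  by rewrite sumrB asum -mulr_sumr nuE.
split => // k.
have := zge k; rewrite le_eqVlt => /orP [/eqP zk0|zk].
  have ak : a k = 0 by case: (hz k) => //; rewrite -zk0 ltxx.
  by rewrite -zk0 ak !(mul0r, mulr0, addr0).
have gk : gg (a k) lam d (z k) = nu.
  rewrite -sumE.
  have -> : \sum_(i < K) z i * gg (a i) lam d (z i) = \sum_(i < K) z i * gg (a k) lam d (z k).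
    apply: eq_bigr => i _.
    have := zge i; rewrite le_eqVlt => /orP [/eqP zi0|zi]; first by rewrite -zi0 !mul0r.
    case: (eqVneq i k) => [->//|ik].
    by rewrite (kkt K0 d0 zm _ _ ik zi zk).
  by rewrite -mulr_suml zs mul1r.
rewrite -gk /gg.
have dz : d + z k != 0 by apply: lt0r_neq0; apply: addr_gt0.
have zk0 : z k != 0 by apply: lt0r_neq0.
rewrite !mulrBl divfK // [_ / _ * z k * _]mulrAC divfK //; lra.
Qed.

Theorem theorem1 (R : realType) (K : nat) (a : 'I_K -> R) (lam : R)
  (z : R -> 'I_K -> R) :
  (0 < K)%N ->
  (forall k, 0 <= a k) ->
  \sum_(k < K) a k = 1 ->
  0 < lam -> lam < 1 / K%:R ->
  (forall delta : R, 0 < delta -> is_minimizer a lam delta (z delta)) ->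
  forall k : 'I_K, (fun delta => z delta k) @ 0^'+ --> z0 a lam k.
Proof.
move=> K0 a0 asum l0 lK zmin.
have lK' : lam * K%:R < 1 by move: lK; rewrite ltr_pdivlMr // ltr0n.
pose nu t := 1 - lam * \sum_(i < K) z t i / (t + z t i).
have H : forall t, 0 < t -> [/\ 0 < nu t, nu t <= 1 &
    forall k, (a k - lam) * z t k + t * a k = nu t * z t k * (t + z t k)].
  move=> t t0.
  have [n0 n1 id] := per_delta (nu t) K0 a0 asum l0 lK' t0 (zmin t t0) erefl.
  by split => // k; rewrite [t * a k]mulrC; exact: id.
have a1 : forall i, a i <= 1.
  move=> i; rewrite -asum (bigD1 i) //= lerDl; exact: sumr_ge0.
apply: (@assemble R K a lam z nu).
- move=> i; apply: (@key_cvg R (a i) lam nu (fun t => z t i) (a0 i) (a1 i) l0).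
  near=> t.
  have t0 : 0 < t by near: t; exact: nbhs_right_gt.
  have [n0 n1 id] := H t t0.
  have [[zge _] _] := zmin t t0.
  by split => //; [exact: ltW | rewrite [a i * t]mulrC; exact: id].
- near=> t.
  have t0 : 0 < t by near: t; exact: nbhs_right_gt.
  have [n0 _ _] := H t t0.
  by have [[_ zs] _] := zmin t t0.
- have : \sum_(i < K) (a i - lam) <= \sum_(i < K) pospart (a i - lam).
    by apply: ler_sum => i _; rewrite /pospart le_max lexx.
  rewrite sumrB asum sumr_const card_ord -mulr_natr; lra.
Unshelve. all: by end_near.
Qed.
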